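(* Let $\mathbf{B}$ be a 2-element algebra with universe $\{0,1\}$ such that at least one of the following holds: (1) $\mathbf{B}\preceq\boldsymbol{\bigwedge}$, (2) $\mathbf{B}\preceq\boldsymbol{\bigvee}$, or (3) $\mathbf{B}\preceq\mathsf{U}$. Let $\mathbf{A}=\mathbf{B}^n$. Then any quantum algorithm which solves $\mathrm{HKP}(\mathbf{A})$ must make $\Omega((1+\epsilon)^n)$ queries to the oracle, for $0<\epsilon<1$.
   Context: $\mathrm{Clo}(\mathbf{B})$ is the clone of term operations of $\mathbf{B}$ (smallest set of operations on $\{0,1\}$ containing the basic operations and projections, closed under composition). For a clone $\mathcal{C}$ on $\{0,1\}$, $\mathbf{B}\preceq\mathcal{C}$ means $\mathrm{Clo}(\mathbf{B})\subseteq\mathcal{C}$. $\boldsymbol{\bigwedge}$ is the clone generated by $x\wedge y$ and the constants $0,1$; $\boldsymbol{\bigvee}$ is the clone generated by $x\vee y$ and the constants $0,1$; $\mathsf{U}$ is the clone generated by $\neg x$ and the constant $0$. $\mathbf{B}^n$ is the direct power with coordinatewise operations. A congruence is an equivalence relation compatible with all operations; $\ker(\phi)=\{(a,b):\phi(a)=\phi(b)\}$. The Hidden Kernel Problem $\mathrm{HKP}(\mathbf{A})$: given a similar algebra $\mathbf{C}$ and a homomorphism $\phi:\mathbf{A}\to\mathbf{C}$ accessible only as an oracle, determine the congruence $\ker(\phi)$. *)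

(* Defs.v *)
From HB Require Import structures.
From mathcomp Require Import all_boot all_order all_algebra all_field.
Set Implicit Arguments. Unset Strict Implicit. Unset Printing Implicit Defensive.
Import Order.TTheory GRing.Theory Num.Theory.
Local Open Scope ring_scope.

Definition bop (k : nat) := k.-tuple bool -> bool.

Definition opset := forall k : nat, bop k -> Prop.

(* Clone generated by F: smallest set containing F and the projections,
   closed under composition (operations identified extensionally). *)
Inductive clo (F : opset) : forall k : nat, bop k -> Prop :=
| clo_proj k (f : bop k) (i : 'I_k) :
    (forall x, f x = tnth x i) -> clo F f
| clo_base k (f g : bop k) :
    F k g -> (forall x, f x = g x) -> clo F f
| clo_comp k m (f : bop k) (g : bop m) (hs : 'I_m -> bop k) :
    clo F g -> (forall j, clo F (hs j)) ->
    (forall x, f x = g [tuple hs j x | j < m]) -> clo F f.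

Definition clone_le (F G : opset) : Prop :=
  forall k (f : bop k), clo F f -> G k f.

(* Generators of the clones /\ (and, constants 0,1), \/ (or, constants 0,1),
   U (negation, constant 0).  Constants are nullary; composition with them
   yields constants of every arity. *)
Definition gen_and : opset := fun k g =>
  [/\ k = 2%N & forall x, g x = nth false x 0 && nth false x 1] \/
  [/\ k = 0%N & forall x, g x = false] \/
  [/\ k = 0%N & forall x, g x = true].
Definition gen_or : opset := fun k g =>
  [/\ k = 2%N & forall x, g x = nth false x 0 || nth false x 1] \/
  [/\ k = 0%N & forall x, g x = false] \/
  [/\ k = 0%N & forall x, g x = true].
Definition gen_U : opset := fun k g =>
  [/\ k = 1%N & forall x, g x = ~~ nth false x 0] \/
  [/\ k = 0%N & forall x, g x = false].

Definition Clo_and := clo gen_and.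
Definition Clo_or := clo gen_or.
Definition Clo_U := clo gen_U.

Definition basic_ops (I : Type) (ar : I -> nat)
  (opsB : forall i, bop (ar i)) : opset :=
  fun k f => exists i (e : ar i = k), forall x, f x = opsB i (tcast (esym e) x).

Definition preceq (I : Type) (ar : I -> nat) (opsB : forall i, bop (ar i))
  (C : forall k, bop k -> Prop) : Prop :=
  forall k (f : bop k), clo (basic_ops opsB) f -> C k f.

Definition pow_op (I : Type) (ar : I -> nat) (opsB : forall i, bop (ar i))
  (n : nat) (i : I) (xs : (ar i).-tuple (n.-tuple bool)) : n.-tuple bool :=
  [tuple opsB i [tuple tnth (tnth xs j) k | j < ar i] | k < n].

Definition is_hom (I : Type) (ar : I -> nat) (opsB : forall i, bop (ar i))
  (n : nat) (C : Type) (opsC : forall i, (ar i).-tuple C -> C)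
  (phi : n.-tuple bool -> C) : Prop :=
  forall i (xs : (ar i).-tuple (n.-tuple bool)),
    phi (pow_op opsB xs) = opsC i (map_tuple phi xs).

(* An HKP(B^n) instance, as seen by the oracle: the function a |-> enc (phi a)
   where phi : B^n -> C is a homomorphism into some similar algebra C and
   enc injectively encodes elements of C as m-bit strings. *)
Definition hkp_instance (I : Type) (ar : I -> nat) (opsB : forall i, bop (ar i))
  (n m : nat) (f : n.-tuple bool -> m.-tuple bool) : Prop :=
  exists (C : Type) (opsC : forall i, (ar i).-tuple C -> C)
         (phi : n.-tuple bool -> C) (enc : C -> m.-tuple bool),
    [/\ is_hom opsB opsC phi, injective enc & forall a, f a = enc (phi a)].

(* ker(phi) (= ker f, since enc is injective), as a set of pairs. *)
Definition kerset (n m : nat) (f : n.-tuple bool -> m.-tuple bool)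
  : {set (n.-tuple bool * n.-tuple bool)} :=
  [set p | f p.1 == f p.2].

(* Basis states: (query register in A = B^n) * (answer register: m bits)
   * (workspace W).  Amplitudes in algC. *)
Definition qbasis (n m : nat) (W : finType) : finType :=
  (n.-tuple bool * m.-tuple bool * W)%type.

Definition xor_tuple (m : nat) (y z : m.-tuple bool) : m.-tuple bool :=
  [tuple addb (tnth y j) (tnth z j) | j < m].

Definition oracle_map (n m : nat) (W : finType)
  (f : n.-tuple bool -> m.-tuple bool) (q : qbasis n m W) : qbasis n m W :=
  (q.1.1, xor_tuple q.1.2 (f q.1.1), q.2).

Definition oracle_mx (n m : nat) (W : finType)
  (f : n.-tuple bool -> m.-tuple bool) : 'M[algC]_#|qbasis n m W| :=
  \matrix_(i, j) (if enum_val i == oracle_map f (enum_val j) then 1 else 0).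

Definition unitary (d : nat) (U : 'M[algC]_d) : Prop :=
  U *m (map_mx (fun z => z^*) U)^T = 1%:M.

(* A T-query quantum algorithm: unitaries U_0, ..., U_T, start basis state,
   and a classical post-processing of the final (full) measurement outcome
   into a candidate congruence (a set of pairs of A). *)
Record qalg (n m : nat) (W : finType) := QAlg {
  qT : nat;
  qU : nat -> 'M[algC]_#|qbasis n m W|;
  qstart : qbasis n m W;
  qout : qbasis n m W -> {set (n.-tuple bool * n.-tuple bool)}
}.

Definition qalg_unitary (n m : nat) (W : finType) (Q : qalg n m W) : Prop :=
  forall k, (k <= qT Q)%N -> unitary (qU Q k).

Fixpoint qstate (n m : nat) (W : finType) (Q : qalg n m W)
  (f : n.-tuple bool -> m.-tuple bool) (k : nat) : 'cV[algC]_#|qbasis n m W| :=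
  match k with
  | 0 => qU Q 0 *m delta_mx (enum_rank (qstart Q)) 0
  | k'.+1 => qU Q k *m (oracle_mx W f *m qstate Q f k')
  end.

Definition success_prob (n m : nat) (W : finType) (Q : qalg n m W)
  (f : n.-tuple bool -> m.-tuple bool) : algC :=
  \sum_(q : qbasis n m W | qout Q q == kerset f)
     `|qstate Q f (qT Q) (enum_rank q) 0| ^+ 2.

(* Q solves HKP(B^n) (bounded error 1/3) on all instances whose codomain
   elements are encoded with m bits. *)
Definition solves_HKP (I : Type) (ar : I -> nat) (opsB : forall i, bop (ar i))
  (n m : nat) (W : finType) (Q : qalg n m W) : Prop :=
  qalg_unitary Q /\
  forall f, hkp_instance opsB f -> 2%:R / 3%:R <= success_prob Q f.

(* Main.v *)
Require Import Defs.
From mathcomp Require Import all_boot all_order all_algebra all_field.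
From mathcomp Require Import zify ring lra.
Import Order.TTheory GRing.Theory Num.Theory.

Module P1.
Set Implicit Arguments. Unset Strict Implicit. Unset Printing Implicit Defensive.
Import Order.TTheory GRing.Theory Num.Theory.
Local Open Scope ring_scope.

Section Clo.
Variable n : nat.
Variable T : Type.
Variable f : n.-tuple bool -> T.

Definition liftop k (g : bop k) (xs : k.-tuple (n.-tuple bool)) : n.-tuple bool :=
  [tuple g [tuple tnth (tnth xs j) c | j < k] | c < n].

Definition pres k (g : bop k) := forall xs ys : k.-tuple (n.-tuple bool),
  (forall j, f (tnth xs j) = f (tnth ys j)) -> f (liftop g xs) = f (liftop g ys).

Lemma liftop_ext k (g h : bop k) xs : (forall x, g x = h x) -> liftop g xs = liftop h xs.
Proof. by move=> e; apply: eq_mktuple => c; rewrite e. Qed.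

Lemma clo_pres (F : opset) : (forall k g, F k g -> pres g) ->
  forall k (g : bop k), clo F g -> pres g.
Proof.
move=> HF k g Hc; elim: Hc => {k g}.
- move=> k g i e xs ys H.
  have E : forall zs, liftop g zs = tnth zs i.
    by move=> zs; apply: eq_from_tnth => c; rewrite tnth_mktuple e tnth_mktuple.
  by rewrite !E.
- move=> k g h Fh e xs ys H.
  by rewrite !(liftop_ext _ e); apply: HF.
- move=> k m g g' hs _ IHg _ IHh e xs ys H.
  have E : forall zs, liftop g zs = liftop g' [tuple liftop (hs j) zs | j < m].
    move=> zs; apply: eq_from_tnth => c; rewrite !tnth_mktuple e; congr g'.
    by apply: eq_from_tnth => j; rewrite !tnth_mktuple.
  rewrite !E; apply: IHg => j; rewrite !tnth_mktuple; exact: IHh.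
Qed.

End Clo.

Lemma hkp_of_pres I (ar : I -> nat) (opsB : forall i, bop (ar i)) n m
  (f : n.-tuple bool -> m.-tuple bool) :
  (forall i, pres f (opsB i)) -> hkp_instance opsB f.
Proof.
move=> H.
pose opsC i (ys : (ar i).-tuple (m.-tuple bool)) : m.-tuple bool :=
  if [pick xs : (ar i).-tuple (n.-tuple bool) | map_tuple f xs == ys] is Some xs
  then f (pow_op opsB xs) else [tuple false | _ < m].
exists (m.-tuple bool), opsC, f, id; split => // i xs.
rewrite /opsC; case: pickP => [xs' /eqP E|/(_ xs)]; last by rewrite eqxx.
apply: H => j; have := congr1 (fun t => tnth t j) E; rewrite !tnth_map => ->//.
Qed.

Lemma pres_of_preceq I (ar : I -> nat) (opsB : forall i, bop (ar i)) (G : opset) n T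
  (f : n.-tuple bool -> T) :
  preceq opsB (clo G) -> (forall k g, G k g -> pres f g) -> forall i, pres f (opsB i).
Proof.
move=> Hp HG i; apply: (clo_pres HG); apply: Hp; apply: (clo_base (g := opsB i)) => //.
by exists i, erefl => x; rewrite tcast_id.
Qed.

Unset Implicit Arguments.
End P1.
Import P1.

Module P2.
Set Implicit Arguments. Unset Strict Implicit. Unset Printing Implicit Defensive.
Import Order.TTheory GRing.Theory Num.Theory.
Local Open Scope ring_scope.

Definition pad n m (x : n.-tuple bool) : m.-tuple bool := [tuple nth false x i | i < m].

Lemma pad_inj n m : (n <= m)%N -> injective (@pad n m).
Proof.
move=> le x y E; apply: eq_from_tnth => i.
have := congr1 (fun t => tnth t (widen_ord le i)) E.
by rewrite /pad !tnth_mktuple /= -!tnth_nth.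
Qed.

Definition collapse n (D : {set n.-tuple bool}) r (x : n.-tuple bool) :=
  if x \in D then r else x.

Definition fc n m D r := fun x => @pad n m (@collapse n D r x).

Lemma fc_ker n m (D : {set n.-tuple bool}) r x y : (n <= m)%N -> r \in D ->
  (fc m D r x = fc m D r y) <-> (x = y \/ (x \in D /\ y \in D)).
Proof.
move=> le rD; rewrite /fc; split.
  move/(pad_inj le); rewrite /collapse.
  by case: ifP => xD; case: ifP => yD => E; subst; auto; rewrite ?rD in xD yD.
by case=> [->|[xD yD]] //; rewrite /collapse xD yD.
Qed.

Definition meetT n (h : bool -> bool -> bool) (x y : n.-tuple bool) : n.-tuple bool :=
  [tuple h (tnth x c) (tnth y c) | c < n].
Definition negT n (x : n.-tuple bool) : n.-tuple bool := [tuple ~~ tnth x c | c < n].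

Lemma pres0 n T (f : n.-tuple bool -> T) (g : bop 0) : pres f g.
Proof. by move=> xs ys _; rewrite (tuple0 xs) (tuple0 ys). Qed.

Lemma pres_bin n m h (D : {set n.-tuple bool}) r (g : bop 2) : (n <= m)%N -> r \in D ->
  (forall x y, x \in D -> meetT h x y \in D /\ meetT h y x \in D) ->
  (forall x, g x = h (nth false x 0) (nth false x 1)) -> pres (fc m D r) g.
Proof.
move=> le rD HD eg xs ys H.
have E : forall zs : 2.-tuple (n.-tuple bool), liftop g zs = meetT h (tnth zs ord0) (tnth zs (lift ord0 ord0)).
  move=> zs; apply: eq_from_tnth => c; rewrite !tnth_mktuple eg.
  by rewrite (nth_mktuple _ _ ord0) (nth_mktuple _ _ (lift ord0 ord0)).
rewrite !E; apply/(fc_ker _ _ le rD).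
have /(fc_ker _ _ le rD) [e0|[x0 y0]] := H ord0;
have /(fc_ker _ _ le rD) [e1|[x1 y1]] := H (lift ord0 ord0).
- by left; rewrite e0 e1.
- by right; split; [apply: (HD _ _ x1).2 | apply: (HD _ _ y1).2].
- by right; split; [apply: (HD _ _ x0).1 | apply: (HD _ _ y0).1].
- by right; split; [apply: (HD _ _ x0).1 | apply: (HD _ _ y0).1].
Qed.

Lemma pres_neg n m (D : {set n.-tuple bool}) r (g : bop 1) : (n <= m)%N -> r \in D ->
  (forall x, x \in D -> negT x \in D) ->
  (forall x, g x = ~~ nth false x 0) -> pres (fc m D r) g.
Proof.
move=> le rD HD eg xs ys H.
have E : forall zs : 1.-tuple (n.-tuple bool), liftop g zs = negT (tnth zs ord0).
  move=> zs; apply: eq_from_tnth => c; rewrite !tnth_mktuple eg.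
  by rewrite (nth_mktuple _ _ ord0).
rewrite !E; apply/(fc_ker _ _ le rD).
have /(fc_ker _ _ le rD) [e0|[x0 y0]] := H ord0.
- by left; rewrite e0.
- by right; split; apply: HD.
Qed.

Lemma gen_and_pres n m (D : {set n.-tuple bool}) r k (g : bop k) : (n <= m)%N -> r \in D ->
  (forall x y, x \in D -> meetT andb x y \in D /\ meetT andb y x \in D) ->
  gen_and g -> pres (fc m D r) g.
Proof.
move=> le rD HD [[ek eg]|[[ek _]|[ek _]]]; subst k; try exact: pres0.
exact: (pres_bin le rD HD eg).
Qed.

Lemma gen_or_pres n m (D : {set n.-tuple bool}) r k (g : bop k) : (n <= m)%N -> r \in D ->
  (forall x y, x \in D -> meetT orb x y \in D /\ meetT orb y x \in D) ->
  gen_or g -> pres (fc m D r) g.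
Proof.
move=> le rD HD [[ek eg]|[[ek _]|[ek _]]]; subst k; try exact: pres0.
exact: (pres_bin le rD HD eg).
Qed.

Lemma gen_U_pres n m (D : {set n.-tuple bool}) r k (g : bop k) : (n <= m)%N -> r \in D ->
  (forall x, x \in D -> negT x \in D) ->
  gen_U g -> pres (fc m D r) g.
Proof.
move=> le rD HD [[ek eg]|[ek _]]; subst k; try exact: pres0.
exact: (pres_neg le rD HD eg).
Qed.

Unset Implicit Arguments.
End P2.
Import P2.

Module P3.
Set Implicit Arguments. Unset Strict Implicit. Unset Printing Implicit Defensive.
Import Order.TTheory GRing.Theory Num.Theory.

Definition wt n (P : bool -> bool) (x : n.-tuple bool) : nat := \sum_(c < n) P (tnth x c).

Lemma wt_meet n P h (x y : n.-tuple bool) :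
  (forall s t, P (h s t) ==> P s) -> (forall s t, P (h s t) = P s -> h s t = s) ->
  (wt P (meetT h x y) <= wt P x)%N /\ (wt P (meetT h x y) = wt P x -> meetT h x y = x).
Proof.
move=> H1 H2; have le : (wt P (meetT h x y) <= wt P x)%N.
  rewrite /wt; apply: leq_sum => c _; rewrite tnth_mktuple.
  by have := H1 (tnth x c) (tnth y c); case: (P _); case: (P _).
split=> // E; apply/eqP; apply/negPn/negP => /eqP ne.
case: (pickP (fun c => tnth (meetT h x y) c != tnth x c)) => [c hc|H0]; last first.
  by apply: ne; apply: eq_from_tnth => c; apply/eqP/negPn; rewrite H0.
move: hc; rewrite tnth_mktuple => hc.
have lt : (P (h (tnth x c) (tnth y c)) < P (tnth x c))%N.
  move: (H1 (tnth x c) (tnth y c)) (H2 (tnth x c) (tnth y c)) hc.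
  by case: (P (h _ _)); case: (P (tnth x c)) => //= _ /(_ erefl) ->; rewrite eqxx.
move: E; rewrite /wt (bigD1 c) //= [X in _ = X](bigD1 c) //= tnth_mktuple => E.
have : (\sum_(i < n | i != c) P (tnth (meetT h x y) i) <= \sum_(i < n | i != c) P (tnth x i))%N.
  apply: leq_sum => i _; rewrite tnth_mktuple.
  by have := H1 (tnth x i) (tnth y i); case: (P _); case: (P _).
move: E lt; set a := (P (h _ _) : nat); set b := (P (tnth x c) : nat).
set u := \sum_(_ < _ | _) _; set v := \sum_(_ < _ | _) _.
move=> E lt le2; have := leq_add lt le2; rewrite -E addSn ltnn //.
Qed.

Section AO.
Variables (n m : nat) (P : bool -> bool) (h : bool -> bool -> bool) (b : bool).
Hypotheses (H1 : forall s t, P (h s t) ==> P s)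
  (H2 : forall s t, P (h s t) = P s -> h s t = s)
  (hC : forall s t, h s t = h t s) (Pb : P b = false)
  (Pb' : forall s, P s = false -> s = b).

Definition rT : n.-tuple bool := [tuple b | _ < n].
Definition D0 k : {set n.-tuple bool} := [set x | (wt P x < k)%N].

Lemma wt_rT : wt P rT = 0%N.
Proof. by rewrite /wt big1 // => c _; rewrite tnth_mktuple Pb. Qed.

Lemma wt0 (x : n.-tuple bool) : wt P x = 0%N -> x = rT.
Proof.
move/eqP; rewrite /wt sum_nat_eq0 => /forallP H; apply: eq_from_tnth => c.
by rewrite tnth_mktuple; apply: Pb'; have := H c; case: (P _).
Qed.

Lemma wt_le (x : n.-tuple bool) : (wt P x <= n)%N.
Proof.
rewrite /wt -[X in (_ <= X)%N]card_ord -sum1_card; apply: leq_sum => c _.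
by case: (P _).
Qed.

Lemma meetC (x y : n.-tuple bool) : meetT h x y = meetT h y x.
Proof. by apply: eq_mktuple => c; rewrite hC. Qed.

Lemma absorb0 k (x y : n.-tuple bool) : x \in D0 k -> meetT h x y \in D0 k /\ meetT h y x \in D0 k.
Proof.
rewrite !inE => lt; have [le _] := wt_meet x y H1 H2.
by split; [|rewrite meetC]; apply: leq_ltn_trans le lt.
Qed.

Lemma absorb1 k (a x y : n.-tuple bool) : wt P a = k -> x \in a |: D0 k ->
  meetT h x y \in a |: D0 k /\ meetT h y x \in a |: D0 k.
Proof.
move=> wa xD; suff S : meetT h x y \in a |: D0 k by split; [|rewrite meetC].
case/setU1P: xD => [->|xD].
  have [le eq] := wt_meet a y H1 H2.
  have [E|ne] := eqVneq (wt P (meetT h a y)) (wt P a).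
    by rewrite (eq E) setU11.
  by rewrite !inE -wa ltn_neqAle ne le orbT.
by have [A B] := absorb0 y xD; rewrite !inE; rewrite !inE in A; rewrite A orbT.
Qed.

Lemma count_classes : exists k : 'I_n.+1,
  (2 ^ n <= n.+1 * #|[set a : n.-tuple bool | wt P a == k]|)%N.
Proof.
have tot : (\sum_(k < n.+1) #|[set a : n.-tuple bool | wt P a == k]| = 2 ^ n)%N.
  rewrite -[2]card_bool -card_tuple -sum1_card.
  rewrite (partition_big (fun a => inord (wt P a) : 'I_n.+1) predT) //=.
  apply: eq_bigr => k _; rewrite -sum1_card; apply: eq_bigl => a.
  rewrite !inE; apply/eqP/eqP => [E|E].
    by rewrite E inord_val.
  by rewrite -E inordK // ltnS wt_le.
case: (pickP (fun k : 'I_n.+1 => 2 ^ n <= n.+1 * #|[set a : n.-tuple bool | wt P a == k]|)%N)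
  => [k hk|H0]; first by exists k.
exfalso; have : (n.+1 * 2 ^ n <= n.+1 * (2 ^ n).-1)%N.
  rewrite -{1}tot big_distrr /=.
  apply: (@leq_trans (\sum_(k < n.+1) (2 ^ n).-1)).
    by apply: leq_sum => k _; rewrite -ltnS prednK ?expn_gt0 // ltnNge H0.
  by rewrite sum_nat_const card_ord.
by rewrite leq_pmul2l // -ltnS prednK ?expn_gt0 // ltnn.
Qed.

End AO.

Unset Implicit Arguments.
End P3.
Import P3.

Module P4.
Set Implicit Arguments. Unset Strict Implicit. Unset Printing Implicit Defensive.
Import Order.TTheory GRing.Theory Num.Theory.
Local Open Scope ring_scope.

Lemma sq_ge0 (x : algC) : 0 <= `|x| ^+ 2.
Proof. by rewrite exprn_ge0. Qed.

Lemma coord_ineq (a b : algC) (k : nat) : (0 < k)%N ->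
  `|a + b| ^+ 2 <= (1 + k%:R) * `|a| ^+ 2 + (1 + k%:R^-1) * `|b| ^+ 2.
Proof.
move=> k0; rewrite -subr_ge0.
have kn0 : (k%:R : algC) != 0 by rewrite pnatr_eq0 -lt0n.
have -> : (1 + k%:R) * `|a| ^+ 2 + (1 + k%:R^-1) * `|b| ^+ 2 - `|a + b| ^+ 2
   = `|k%:R * a - b| ^+ 2 / k%:R.
  rewrite !normCK !rmorphD !rmorphN rmorphM /= conjC_nat.
  by field.
by rewrite divr_ge0 ?sq_ge0 ?ler0n.
Qed.

Lemma subsum (I : finType) (P Q : pred I) (F : I -> algC) :
  (forall i, 0 <= F i) -> (forall i, P i -> Q i) ->
  \sum_(i | P i) F i <= \sum_(i | Q i) F i.
Proof.
move=> F0 PQ; rewrite [X in _ <= X](bigID P) /=.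
have -> : \sum_(i | Q i && P i) F i = \sum_(i | P i) F i.
  by apply: eq_bigl => i; case: (boolP (P i)) => Pi; rewrite ?andbT ?andbF // PQ.
by rewrite lerDl sumr_ge0.
Qed.

Section Vec.
Variable d : nat.
Implicit Types (u v : 'cV[algC]_d) (U : 'M[algC]_d).

Definition nrm2 v : algC := \sum_(i < d) `|v i 0| ^+ 2.

Lemma nrm2_ge0 v : 0 <= nrm2 v.
Proof. by apply: sumr_ge0 => i _; apply: sq_ge0. Qed.

Lemma nrm2_mx v : nrm2 v = ((map_mx Num.conj_op v)^T *m v) 0 0.
Proof. by rewrite !mxE; apply: eq_bigr => i _; rewrite !mxE normCK mulrC. Qed.

Lemma unitary_nrm2 U v : unitary U -> nrm2 (U *m v) = nrm2 v.
Proof.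
rewrite /unitary => HU.
have HU' : U *m (map_mx Num.conj_op U)^T = 1%:M.
  by rewrite -HU; congr (_ *m _); congr trmx; apply/matrixP => i j; rewrite !mxE.
have H2 := mulmx1C HU'.
rewrite !nrm2_mx map_mxM trmx_mul -mulmxA [X in _ *m X]mulmxA H2 mul1mx //.
Qed.

Lemma nrm2_add u v k : (0 < k)%N ->
  nrm2 (u + v) <= (1 + k%:R) * nrm2 u + (1 + k%:R^-1) * nrm2 v.
Proof.
move=> k0; rewrite /nrm2 !mulr_sumr -big_split /=; apply: ler_sum => i _.
by rewrite mxE; apply: coord_ineq.
Qed.

Lemma nrm2_0 : nrm2 (0 : 'cV[algC]_d) = 0.
Proof. by rewrite /nrm2 big1 // => i _; rewrite mxE normr0 expr0n. Qed.

End Vec.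

Lemma subE p q (A B : 'M[algC]_(p, q)) i j : (A - B) i j = A i j - B i j.
Proof. by rewrite !mxE. Qed.

Section Oracle.
Variables (n m : nat) (W : finType).
Local Notation QB := (qbasis n m W).
Local Notation d := #|QB|.
Implicit Types (f g : n.-tuple bool -> m.-tuple bool) (v : 'cV[algC]_d).

Lemma xorK m' (y z : m'.-tuple bool) : xor_tuple (xor_tuple y z) z = y.
Proof. by apply: eq_from_tnth => j; rewrite !tnth_mktuple addbK. Qed.

Lemma oracle_invol f (q : QB) : oracle_map f (oracle_map f q) = q.
Proof. by case: q => [[a y] w]; rewrite /oracle_map /= xorK. Qed.

Definition pi f (i : 'I_d) : 'I_d := enum_rank (oracle_map f (enum_val i)).

Lemma pi_invol f : involutive (pi f).
Proof. by move=> i; rewrite /pi enum_rankK oracle_invol enum_valK. Qed.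

Lemma pi_inj f : injective (pi f).
Proof. exact: inv_inj (pi_invol f). Qed.

Lemma oracle_apply f v i : (oracle_mx W f *m v) i 0 = v (pi f i) 0.
Proof.
rewrite mxE (bigD1 (pi f i)) //= big1 ?addr0.
  by rewrite mxE /pi enum_rankK oracle_invol eqxx mul1r.
move=> j nj; rewrite mxE; case: eqP => [E|_]; last by rewrite mul0r.
by move: nj; rewrite /pi E oracle_invol enum_valK eqxx.
Qed.

Lemma oracle_nrm2 f v : nrm2 (oracle_mx W f *m v) = nrm2 v.
Proof.
rewrite /nrm2 (reindex_inj (@pi_inj f)) /=; apply: eq_bigr => i _.
by rewrite oracle_apply pi_invol.
Qed.

Definition Pp (p : n.-tuple bool) v : algC :=
  \sum_(i < d | (enum_val i).1.1 == p) `|v i 0| ^+ 2.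

Lemma pi_fst f i : (enum_val (pi f i)).1.1 = (enum_val i).1.1.
Proof. by rewrite /pi enum_rankK. Qed.

Lemma oracle_diff f g p v : (forall x, x != p -> g x = f x) ->
  nrm2 (oracle_mx W g *m v - oracle_mx W f *m v) <= 4%:R * Pp p v.
Proof.
move=> Hfg; rewrite /nrm2 (bigID (fun i => (enum_val i).1.1 == p)) /=.
rewrite [X in _ + X]big1 ?addr0; last first.
  move=> i ni; rewrite subE !oracle_apply.
  suff -> : pi g i = pi f i by rewrite subrr normr0 expr0n.
  by rewrite /pi /oracle_map Hfg.
apply: (@le_trans _ _ (\sum_(i < d | (enum_val i).1.1 == p)
    (2%:R * `|v (pi g i) 0| ^+ 2 + 2%:R * `|v (pi f i) 0| ^+ 2))).
  apply: ler_sum => i _; rewrite subE !oracle_apply.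
  by have := coord_ineq (v (pi g i) 0) (- v (pi f i) 0) (ltnSn 0); rewrite normrN invr1.
rewrite big_split /= -!mulr_sumr.
have E : forall h, \sum_(i < d | (enum_val i).1.1 == p) `|v (pi h i) 0| ^+ 2 = Pp p v.
  move=> h; rewrite /Pp (reindex_inj (@pi_inj h)) /=.
  by apply: eq_big => i; rewrite ?pi_fst ?pi_invol.
by rewrite !E -mulrDl -natrD.
Qed.

Lemma sum_Pp (S : {set n.-tuple bool}) v : \sum_(p in S) Pp p v <= nrm2 v.
Proof.
rewrite /Pp /nrm2.
have -> : \sum_(p in S) \sum_(i < d | (enum_val i).1.1 == p) `|v i 0| ^+ 2
   = \sum_(i < d | (enum_val i).1.1 \in S) `|v i 0| ^+ 2.
  rewrite (partition_big (fun i => (enum_val i).1.1) (mem S)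
    (P := fun i => (enum_val i).1.1 \in S)) //.
  apply: eq_bigr => p pS; apply: eq_bigl => i.
  by case: eqP => [->|_]; rewrite ?pS ?andbF.
by apply: subsum => // i; apply: sq_ge0.
Qed.

End Oracle.

Section Alg.
Variables (n m : nat) (W : finType) (Q : qalg n m W).
Hypothesis HU : qalg_unitary Q.
Local Notation QB := (qbasis n m W).
Local Notation d := #|QB|.
Local Notation T := (qT Q).

Lemma state_norm f j : (j <= T)%N -> nrm2 (qstate Q f j) = 1.
Proof.
elim: j => [_|j IH lt] /=.
  rewrite unitary_nrm2; last by apply: HU.
  rewrite /nrm2 (bigD1 (enum_rank (qstart Q))) //= big1.
    by rewrite mxE !eqxx normr1 expr1n addr0.
  by move=> i ni; rewrite mxE (negbTE ni) normr0 expr0n.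
by rewrite unitary_nrm2 ?oracle_nrm2 ?IH ?(ltnW lt) //; apply: HU.
Qed.

Definition ediff f g l :=
  nrm2 (oracle_mx W g *m qstate Q f l - oracle_mx W f *m qstate Q f l).

Lemma hybrid f g j : (j <= T)%N ->
  nrm2 (qstate Q g j - qstate Q f j) <= j%:R * \sum_(l < j) ediff f g l.
Proof.
elim: j => [_|j IH lt]; first by rewrite /= subrr nrm2_0 mul0r.
rewrite /= -mulmxBr unitary_nrm2; last by apply: HU.
have -> : oracle_mx W g *m qstate Q g j - oracle_mx W f *m qstate Q f j =
   (oracle_mx W g *m qstate Q f j - oracle_mx W f *m qstate Q f j)
   + oracle_mx W g *m (qstate Q g j - qstate Q f j).
  set A := oracle_mx W g *m qstate Q g j; set B := oracle_mx W f *m qstate Q f j.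
  set C := oracle_mx W g *m qstate Q f j.
  by rewrite mulmxBr -/A -/C [in RHS]addrC [in RHS]addrA subrK.
case: j IH lt => [|j] IH lt.
  by rewrite /= subrr mulmx0 addr0 big_ord1 mul1r.
apply: le_trans (nrm2_add _ _ (ltn0Sn j)) _.
rewrite oracle_nrm2.
apply: (@le_trans _ _ ((1 + j.+1%:R) * ediff f g j.+1 +
   (1 + j.+1%:R^-1) * (j.+1%:R * \sum_(l < j.+1) ediff f g l))).
  rewrite lerD2l; apply: ler_wpM2l; last by apply: IH; apply: ltnW.
  by rewrite addr_ge0 ?invr_ge0 ?ler0n.
rewrite (big_ord_recr j.+1) /=.
have jn0 : (j.+1%:R : algC) != 0 by rewrite pnatr_eq0.
rewrite le_eqVlt; apply/orP; left; apply/eqP.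
rewrite -(natr1 (R := algC) j.+1); field; by rewrite addrC natr1 pnatr_eq0.
Qed.

Lemma sp_idx f : success_prob Q f =
  \sum_(i < d | qout Q (enum_val i) == kerset f) `|qstate Q f T i 0| ^+ 2.
Proof.
rewrite /success_prob [RHS](reindex enum_rank) /=; last exact: onW_bij (enum_rank_bij _).
by apply: eq_bigl => q; rewrite enum_rankK.
Qed.

Lemma lower_pt f g : 2%:R / 3%:R <= success_prob Q f ->
  2%:R / 3%:R <= success_prob Q g -> kerset g != kerset f ->
  1 <= 18%:R * nrm2 (qstate Q g T - qstate Q f T).
Proof.
rewrite !sp_idx => hA hBg ne.
set u := qstate Q f T in hA *; set v := qstate Q g T in hBg *.
set A := \sum_(i < d | _) _ in hA; set Bg := \sum_(i < d | _) _ in hBg.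
set B := \sum_(i < d | qout Q (enum_val i) == kerset f) `|v i 0| ^+ 2.
set Dg := \sum_(i < d | qout Q (enum_val i) == kerset f) `|u i 0 - v i 0| ^+ 2.
set D := nrm2 (v - u).
have nv : nrm2 v = 1 by apply: state_norm.
have hBB : B + Bg <= 1.
  rewrite -nv /nrm2 (bigID (fun i => qout Q (enum_val i) == kerset f)) /= lerD2l.
  apply: subsum => [i|i /eqP E]; first exact: sq_ge0.
  by apply/eqP => E'; move: ne; rewrite -E -E' eqxx.
have hAD : A <= 4%:R * Dg + (1 + 3%:R^-1) * B.
  rewrite /Dg /B !mulr_sumr -big_split /=; apply: ler_sum => i _.
  have := coord_ineq (u i 0 - v i 0) (v i 0) (isT : (0 < 3)%N).
  by rewrite subrK [1 + _]addrC natr1.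
have hDg : Dg <= D.
  rewrite /D /nrm2; apply: (@le_trans _ _ (\sum_(i < d | true) `|u i 0 - v i 0| ^+ 2)).
    by apply: subsum => // i; apply: sq_ge0.
  by rewrite le_eqVlt; apply/orP; left; apply/eqP; apply: eq_bigr => i _; rewrite subE distrC.
have key : 2%:R / 3%:R <= 4%:R * D + (1 + 3%:R^-1) * (1 - 2%:R / 3%:R).
  apply: le_trans hA _; apply: le_trans hAD _; apply: lerD.
    by apply: ler_wpM2l; rewrite ?ler0n.
  apply: ler_wpM2l; first by rewrite addr_ge0 ?invr_ge0 ?ler0n.
  by rewrite lerBrDr; apply: le_trans hBB; rewrite lerD2l.
rewrite -subr_ge0.
have -> : 18%:R * D - 1 = 9%:R / 2%:R * (4%:R * D + (1 + 3%:R^-1) * (1 - 2%:R / 3%:R) - 2%:R / 3%:R).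
  by field; rewrite ?pnatr_eq0.
by apply: mulr_ge0; rewrite ?subr_ge0 // divr_ge0 ?ler0n.
Qed.

Lemma qlower f0 (S : {set n.-tuple bool}) (fam : n.-tuple bool -> n.-tuple bool -> m.-tuple bool) :
  2%:R / 3%:R <= success_prob Q f0 ->
  (forall p, p \in S -> 2%:R / 3%:R <= success_prob Q (fam p)) ->
  (forall p, p \in S -> forall x, x != p -> fam p x = f0 x) ->
  (forall p, p \in S -> kerset (fam p) != kerset f0) ->
  (#|S| <= 72 * T ^ 2)%N.
Proof.
move=> h0 hS hagree hne.
rewrite -(ler_nat algC) -sum1_card natr_sum.
apply: (@le_trans _ _ (\sum_(p in S) 18%:R * nrm2 (qstate Q (fam p) T - qstate Q f0 T))).
  by apply: ler_sum => p pS; apply: lower_pt; auto.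
apply: (@le_trans _ _ (\sum_(p in S) 18%:R * (T%:R * \sum_(l < T) 4%:R * Pp p (qstate Q f0 l)))).
  apply: ler_sum => p pS; apply: ler_wpM2l; first by rewrite ler0n.
  apply: le_trans (hybrid _ _ (leqnn T)) _; apply: ler_wpM2l; first by rewrite ler0n.
  by apply: ler_sum => l _; apply: oracle_diff; apply: hagree.
have -> : \sum_(p in S) 18%:R * (T%:R * \sum_(l < T) 4%:R * Pp p (qstate Q f0 l))
   = (18%:R * T%:R * 4%:R) * \sum_(l < T) \sum_(p in S) Pp p (qstate Q f0 l) :> algC.
  rewrite exchange_big mulr_sumr; apply: eq_bigr => p _.
  by rewrite -mulr_sumr; ring.
apply: (@le_trans _ _ ((18%:R * T%:R * 4%:R) * \sum_(l < T) 1)).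
  apply: ler_wpM2l; first by rewrite !mulr_ge0 ?ler0n.
  apply: ler_sum => l _.
  by rewrite -(state_norm f0 (ltnW (ltn_ord l))); apply: sum_Pp.
rewrite sumr_const card_ord -[_ *+ T]mulr_natr mul1r -!natrM le_eqVlt; apply/orP; left.
by apply/eqP; congr (_%:R); rewrite expnS expn1; ring.
Qed.

End Alg.

Unset Implicit Arguments.
End P4.
Import P4.

Module P5.
Set Implicit Arguments. Unset Strict Implicit. Unset Printing Implicit Defensive.
Import Order.TTheory GRing.Theory Num.Theory.

Definition good_family I (ar : I -> nat) (opsB : forall i, bop (ar i)) n m
  (f0 : n.-tuple bool -> m.-tuple bool) (S : {set n.-tuple bool})
  (fam : n.-tuple bool -> n.-tuple bool -> m.-tuple bool) :=
  [/\ hkp_instance opsB f0, (forall p, p \in S -> hkp_instance opsB (fam p)),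
      (forall p, p \in S -> forall x, x != p -> fam p x = f0 x),
      (forall p, p \in S -> kerset (fam p) != kerset f0)
    & (2 ^ n <= n.+1 * #|S|)%N].

Lemma ltn_exp2 n : (2 <= n)%N -> (n.+1 < 2 ^ n)%N.
Proof.
case: n => [|[|j]] // _; elim: j => [|j IH] //.
rewrite expnS mul2n -addnn; apply: leq_trans (leq_add IH IH); lia.
Qed.

Lemma kerset_ne n m (f g : n.-tuple bool -> m.-tuple bool) x y :
  f x = f y -> g x != g y -> kerset f != kerset g.
Proof.
move=> E ne; apply/eqP => K.
have : (x, y) \in kerset f by rewrite inE E.
by rewrite K inE (negbTE ne).
Qed.

Section AOfam.
Variables (I : Type) (ar : I -> nat) (opsB : forall i, bop (ar i)) (G : opset).
Variables (n m : nat) (P : bool -> bool) (h : bool -> bool -> bool) (b : bool).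
Hypotheses (H1 : forall s t, P (h s t) ==> P s)
  (H2 : forall s t, P (h s t) = P s -> h s t = s)
  (hC : forall s t, h s t = h t s) (Pb : P b = false)
  (Pb' : forall s, P s = false -> s = b).
Hypothesis Hgen : forall k (g : bop k) (D : {set n.-tuple bool}) r, (n <= m)%N -> r \in D ->
  (forall x y, x \in D -> meetT h x y \in D /\ meetT h y x \in D) -> G g -> pres (fc m D r) g.
Hypothesis Hp : preceq opsB (clo G).

Lemma AO_family : (2 <= n)%N -> (n <= m)%N -> exists f0 S fam, @good_family I ar opsB n m f0 S fam.
Proof.
move=> n2 le.
have [k hk] := count_classes n P.
have k0 : (0 < k)%N.
  rewrite lt0n; apply/negP => /eqP k0; move: hk; rewrite k0.
  have : #|[set a : n.-tuple bool | wt P a == 0%N]| <= 1.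
    rewrite -(cards1 (rT n b)); apply: subset_leq_card; apply/subsetP => a.
    by rewrite !inE => /eqP /(wt0 Pb') ->.
  move=> c1 h2; have := leq_trans h2 (leq_mul (leqnn _) c1).
  by rewrite muln1 leqNgt ltn_exp2.
have rD0 : rT n b \in D0 n P k by rewrite inE wt_rT.
exists (fc m (D0 n P k) (rT n b)), [set a : n.-tuple bool | wt P a == k],
  (fun a => fc m (a |: D0 n P k) (rT n b)); split => //.
- apply: hkp_of_pres; apply: (pres_of_preceq Hp) => k' g Gg.
  apply: Hgen => // x y; exact: (absorb0 H1 H2 hC).
- move=> a; rewrite inE => /eqP wa.
  apply: hkp_of_pres; apply: (pres_of_preceq Hp) => k' g Gg.
  apply: Hgen => //; first by rewrite setU1r.
  move=> x y; exact: (absorb1 H1 H2 hC).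
- move=> a _ x xa; rewrite /fc /collapse in_setU1 (negbTE xa) //.
- move=> a; rewrite inE => /eqP wa.
  apply: (@kerset_ne _ _ _ _ a (rT n b)).
    by rewrite /fc /collapse setU11 setU1r.
  rewrite /fc /collapse rD0 inE wa ltnn; apply/negP => /eqP /(pad_inj le) E.
  by move: wa; rewrite E (wt_rT _ Pb) => k0'; move: k0; rewrite -k0' ltnn.
Qed.

End AOfam.

Lemma negTK n (x : n.-tuple bool) : negT (negT x) = x.
Proof. by apply: eq_from_tnth => c; rewrite !tnth_mktuple negbK. Qed.

Lemma U_family I (ar : I -> nat) (opsB : forall i, bop (ar i)) n m :
  preceq opsB Clo_U -> (1 <= n)%N -> (n <= m)%N ->
  exists f0 S fam, @good_family I ar opsB n m f0 S fam.
Proof.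
move=> Hp n1 le.
exists (@pad n m), [set: n.-tuple bool],
  (fun p => fc m [set p; negT p] (negT p)); split => //.
- apply: hkp_of_pres => i xs ys H; congr pad; congr (pow_op opsB _).
  by apply: eq_from_tnth => j; apply: (pad_inj le); apply: H.
- move=> p _; apply: hkp_of_pres; apply: (pres_of_preceq Hp) => k g Gg.
  apply: gen_U_pres => //; first by rewrite !inE eqxx orbT.
  by move=> x; rewrite !inE => /orP [] /eqP ->; rewrite ?negTK eqxx ?orbT.
- move=> p _ x xp; rewrite /fc /collapse !inE (negbTE xp) /=.
  by case: eqP => [->|].
- move=> p _; apply: (@kerset_ne _ _ _ _ p (negT p)).
    by rewrite /fc /collapse !inE !eqxx ?orbT.
  apply/negP => /eqP /(pad_inj le) E.
  case: n n1 le p E => // n' _ _ p E.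
  have := congr1 (fun t => tnth t ord0) E; rewrite tnth_mktuple.
  by case: (tnth p ord0).
- by rewrite cardsT card_tuple card_bool leq_pmull.
Qed.

Lemma and_family I (ar : I -> nat) (opsB : forall i, bop (ar i)) n m :
  preceq opsB Clo_and -> (2 <= n)%N -> (n <= m)%N ->
  exists f0 S fam, @good_family I ar opsB n m f0 S fam.
Proof.
move=> Hp; apply: (@AO_family I ar opsB gen_and n m id andb false) => //.
all: first [by move=> k g D r le rD HD Gg; apply: gen_and_pres | by move=> [] [] | by case].
Qed.

Lemma or_family I (ar : I -> nat) (opsB : forall i, bop (ar i)) n m :
  preceq opsB Clo_or -> (2 <= n)%N -> (n <= m)%N ->
  exists f0 S fam, @good_family I ar opsB n m f0 S fam.
Proof.
move=> Hp; apply: (@AO_family I ar opsB gen_or n m negb orb true) => //.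
all: first [by move=> k g D r le rD HD Gg; apply: gen_or_pres | by move=> [] [] | by case].
Qed.

Lemma nat_ineq n : ((n.+1) * 81 ^ n <= 2 * 128 ^ n)%N.
Proof.
elim: n => [|n IH] //; case: n IH => [|n] IH //.
rewrite [81 ^ _]expnS [128 ^ _]expnS.
move: IH; generalize (81 ^ n.+1) (128 ^ n.+1) => X Y IH; nia.
Qed.

Unset Implicit Arguments.
End P5.
Import P5.

Import Order.TTheory GRing.Theory Num.Theory.
Local Open Scope ring_scope.

Lemma final_nat n T : (2 ^ n <= n.+1 * (72 * T ^ 2))%N -> (9 ^ n <= 12 * 8 ^ n * T)%N.
Proof.
move=> B; rewrite -leq_sqr.
have A := nat_ineq n.
have E1 : ((9 ^ n) ^ 2 = 81 ^ n)%N by rewrite -expnM mulnC expnM.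
have E2 : ((12 * 8 ^ n * T) ^ 2 = 144 * 64 ^ n * T ^ 2)%N.
  have E4 : ((8 ^ n) ^ 2 = 64 ^ n)%N by rewrite -expnM mulnC expnM.
  by rewrite !expnMn E4.
have E3 : (128 ^ n = 64 ^ n * 2 ^ n)%N by rewrite -expnMn.
rewrite E1 E2; rewrite E3 in A.
have : (n.+1 * 81 ^ n <= n.+1 * (144 * 64 ^ n * T ^ 2))%N.
  apply: leq_trans A _.
  apply: (@leq_trans (2 * (64 ^ n * (n.+1 * (72 * T ^ 2))))).
    by rewrite leq_mul2l leq_mul2l B !orbT.
  by rewrite !mulnA (mulnC 2) -!mulnA leq_eqVlt; apply/orP; left; apply/eqP; ring.
by rewrite leq_mul2l.
Qed.

Theorem theorem5p2 (I : Type) (ar : I -> nat) (opsB : forall i, bop (ar i)) :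
  preceq opsB Clo_and \/ preceq opsB Clo_or \/ preceq opsB Clo_U ->
  exists (eps c : rat), [/\ 0 < eps, eps < 1 & 0 < c] /\
  exists N : nat, forall n : nat, (N <= n)%N ->
    forall (m : nat), (n <= m)%N ->
    forall (W : finType) (Q : qalg n m W), solves_HKP opsB Q ->
      c * (1 + eps) ^+ n <= (qT Q)%:R.
Proof.
move=> H; exists (1 / 8%:R), (1 / 12%:R); split; first by split; lra.
exists 2%N => n n2 m le W Q [HU Hsol].
have bound : (2 ^ n <= n.+1 * (72 * qT Q ^ 2))%N.
  have [f0 [S [fam [h0 hS hag hne hc]]]] : exists f0 S fam, @good_family I ar opsB n m f0 S fam.
    case: H => [H|[H|H]].
    - exact: and_family.
    - exact: or_family.
    - by apply: U_family => //; apply: leq_trans n2.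
  have hq := qlower HU (Hsol _ h0) (fun p pS => Hsol _ (hS p pS)) hag hne.
  by apply: leq_trans hc _; rewrite leq_mul2l hq orbT.
have F := @final_nat _ _ bound.
have e1 : (1 + 1 / 8%:R : rat) = 9%:R / 8%:R by field.
rewrite e1 expr_div_n -!natrX.
have -> : 1 / 12%:R * ((9 ^ n)%:R / (8 ^ n)%:R) = (9 ^ n)%:R / (12 * 8 ^ n)%:R :> rat.
  by rewrite natrM; field; rewrite pnatr_eq0 expn_eq0.
rewrite ler_pdivrMr ?ltr0n ?muln_gt0 ?expn_gt0 //.
by rewrite -natrM ler_nat mulnC.
Qed.
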